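(* Let $0\le r\le n$. The operators $K_{rj}$, $j=0,1,\dots,r$, form a basis of the vector space $\mathcal L_{r,r}$; in particular $\dim\mathcal L_{r,r}=r+1$.
   Context: $D=d/dx$. For $s\ge0$, $\mathcal P_s$ is the space of real polynomials in $x$ of degree at most $s$, and $\mathcal P_s=\{0\}$ for $s<0$. For $0\le m\le r$, $\mathcal L_{r,m}$ denotes the real vector space of linear differential operators $L=\sum_{i=0}^r a_i(x)D^i$ with $a_i\in\mathbb R[x]$ (order at most $r$) such that $L(\mathcal P_n)\subset\mathcal P_{n-m}$ (deficiency at least $m$ relative to $\mathcal P_n$). Pochhammer operator: $(a-xD)_k=(-1)^k(xD-a)(xD-(a-1))\cdots(xD-(a-k+1))$. $K_{rj}=\frac{1}{(r-j)!}(n-j-xD)_{r-j}D^j$. *)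

(* Defs.v *)
From mathcomp Require Import all_boot all_order all_algebra.
Set Implicit Arguments. Unset Strict Implicit. Unset Printing Implicit Defensive.
Import Order.TTheory GRing.Theory Num.Theory.
Local Open Scope ring_scope.

(* Linear differential operators with polynomial coefficients are identified
   with their action on R[x] (faithful in characteristic 0). *)

Section Ops.
Variable R : realFieldType.

Definition diffop_app (a : seq {poly R}) (p : {poly R}) : {poly R} :=
  \sum_(i < size a) a`_i * p^`(i).

(* membership in P_s, with P_s = {0} for s < 0 *)
Definition inP (s : int) (p : {poly R}) : bool :=
  if s is Posz k then (size p <= k.+1)%N else p == 0.

Definition Lspace (n r m : nat) (L : {poly R} -> {poly R}) : Prop :=
  (exists a : seq {poly R}, (size a <= r.+1)%N /\ L =1 diffop_app a) /\
  (forall p : {poly R}, (size p <= n.+1)%N -> inP (n%:Z - m%:Z) (L p)).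

Definition xD (p : {poly R}) : {poly R} := 'X * p^`().

(* Pochhammer operator (a - xD)_k = prod_{l<k} (a - l - xD) *)
Fixpoint poch (a : R) (k : nat) (p : {poly R}) : {poly R} :=
  match k with
  | 0 => p
  | k'.+1 => let q := poch a k' p in (a - k'%:R) *: q - xD q
  end.

Definition Kop (n r j : nat) (p : {poly R}) : {poly R} :=
  ((r - j)`!%:R)^-1 *: poch (n%:R - j%:R) (r - j) (p^`(j)).

End Ops.

(* Main.v *)
Require Import Defs.
From mathcomp Require Import all_boot all_order all_algebra.
From mathcomp Require Import ring lra zify.
Import Order.TTheory GRing.Theory Num.Theory.
Local Open Scope ring_scope.
Set Implicit Arguments. Unset Strict Implicit.

Definition Dop (R : realFieldType) (r : nat) (T : {poly R} -> {poly R}) :=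
  exists a : nat -> {poly R}, forall p, T p = \sum_(i < r.+1) a i * p^`(i).

Lemma Dop_ext (R : realFieldType) (r : nat) (T S : {poly R} -> {poly R}) :
  (forall p, T p = S p) -> Dop r S -> Dop r T.
Proof. move=> e [a Ha]; exists a => p; by rewrite e Ha. Qed.

Lemma Dop_lin (R : realFieldType) (r : nat) (T S : {poly R} -> {poly R}) (u v : {poly R}) :
  Dop r T -> Dop r S -> Dop r (fun p => u * T p + v * S p).
Proof.
move=> [a Ha] [b Hb]; exists (fun i => u * a i + v * b i) => p.
rewrite Ha Hb !mulr_sumr -big_split /=; apply: eq_bigr => i _.
by rewrite mulrDl !mulrA.
Qed.

Lemma Dop_mono (R : realFieldType) (r s : nat) (T : {poly R} -> {poly R}) :
  (r <= s)%N -> Dop r T -> Dop s T.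
Proof.
move=> rs [a Ha]; exists (fun i => if (i < r.+1)%N then a i else 0) => p.
rewrite Ha (big_ord_widen s.+1 (fun i => a i * p^`(i))) //.
rewrite big_mkcond /=; apply: eq_bigr => i _.
by case: ifP => _ //; rewrite mul0r.
Qed.

Lemma Dop_derivR (R : realFieldType) (r : nat) (T : {poly R} -> {poly R}) :
  Dop r T -> Dop r.+1 (fun p => T (p^`())).
Proof.
move=> [a Ha]; exists (fun i => if i is i'.+1 then a i' else 0) => p.
rewrite Ha [RHS]big_ord_recl /= mul0r add0r; apply: eq_bigr => i _.
by rewrite add0n -derivnS derivSn.
Qed.

Lemma Dop_derivL (R : realFieldType) (r : nat) (T : {poly R} -> {poly R}) :
  Dop r T -> Dop r.+1 (fun p => (T p)^`()).
Proof.
move=> D; have [a Ha] := D.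
have D1 : Dop r (fun p => \sum_(i < r.+1) (a i)^`() * p^`(i)).
  by exists (fun i => (a i)^`()).
have E : forall p, (T p)^`() = 1 * (\sum_(i < r.+1) (a i)^`() * p^`(i)) + 1 * T (p^`()).
  move=> p; rewrite !mul1r !Ha raddf_sum -big_split /=; apply: eq_bigr => i _.
  by rewrite derivM -derivnS derivSn.
eapply Dop_ext; first exact: E. apply: Dop_lin; first exact: Dop_mono D1.
exact: Dop_derivR.
Qed.

Lemma Dop_poch (R : realFieldType) (a : R) (k : nat) : Dop k (poch a k).
Proof.
elim: k => [|k IH].
  by exists (fun _ => 1) => p; rewrite big_ord1 mul1r derivn0.
have E : forall p, poch a k.+1 p = (a - k%:R)%:P * poch a k p + (-'X) * (poch a k p)^`().
  by move=> p; rewrite /= /xD mul_polyC mulNr.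
eapply Dop_ext; first exact: E. apply: Dop_lin; first exact: Dop_mono IH.
exact: Dop_derivL.
Qed.

Lemma Dop_compn (R : realFieldType) (m j : nat) (T : {poly R} -> {poly R}) :
  Dop m T -> Dop (m + j) (fun p => T (p^`(j))).
Proof.
move=> D; elim: j => [|j IH].
  rewrite addn0; eapply Dop_ext; last exact: D. by move=> p; rewrite derivn0.
rewrite addnS; apply: (Dop_ext _ (Dop_derivR IH)) => p.
by rewrite derivSn.
Qed.

Lemma Dop_Kop (R : realFieldType) (n r j : nat) : (j <= r)%N -> Dop r (@Kop R n r j).
Proof.
move=> jr; have D := Dop_compn j (Dop_poch (n%:R - j%:R : R) (r - j)).
rewrite subnK // in D.
have E : forall p : {poly R}, Kop n r j p = ((r - j)`!%:R^-1)%:P * poch (n%:R - j%:R) (r - j) (p^`(j))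
   + 0 * poch (n%:R - j%:R) (r - j) (p^`(j)).
  by move=> p; rewrite mul0r addr0 mul_polyC.
eapply Dop_ext; first exact: E. by apply: Dop_lin.
Qed.

Lemma Dop_sum (R : realFieldType) (r m : nat) (F : nat -> {poly R} -> {poly R}) :
  (forall j, (j < m)%N -> Dop r (F j)) -> Dop r (fun p => \sum_(j < m) F j p).
Proof.
elim: m => [|m IH] H.
  by exists (fun _ => 0) => p; rewrite !big_ord0 big1 // => i _; rewrite mul0r.
have E : forall p, \sum_(j < m.+1) F j p = 1 * \sum_(j < m) F j p + 1 * F m p.
  by move=> p; rewrite big_ord_recr !mul1r.
eapply Dop_ext; first exact: E. apply: Dop_lin.
  by apply: IH => j jm; apply: H; apply: ltnW.
by apply: H.
Qed.

Lemma coef_poch (R : realFieldType) (a : R) (k : nat) (p : {poly R}) (m : nat) :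
  (poch a k p)`_m = \prod_(l < k) (a - l%:R - m%:R) * p`_m.
Proof.
have xd : forall q : {poly R}, (xD q)`_m = q`_m * m%:R.
  move=> q; rewrite /xD coefXM; case: m => [|m] /=; first by rewrite mulr0.
  by rewrite coef_deriv mulr_natr.
elim: k => [|k IH]; first by rewrite big_ord0 mul1r.
rewrite /= coefB coefZ xd IH big_ord_recr /=; ring.
Qed.

Lemma coef_Kop (R : realFieldType) (n r j : nat) (p : {poly R}) (t : nat) :
  (Kop n r j p)`_t = (r - j)`!%:R^-1 *
     (\prod_(l < r - j) ((n%:R - j%:R : R) - l%:R - t%:R) * (p`_(j + t) *+ (j + t) ^_ j)).
Proof. by rewrite /Kop coefZ coef_poch coef_derivn. Qed.

Lemma Kop_deg (R : realFieldType) (n r j : nat) (p : {poly R}) (t : nat) :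
  (j <= r)%N -> (r <= n)%N -> (size p <= n.+1)%N -> (n - r < t)%N ->
  (Kop n r j p)`_t = 0.
Proof.
move=> jr rn sp tn; rewrite coef_Kop.
case: (leqP (j + t) n) => h.
  have l0 : (n - j - t < r - j)%N by lia.
  rewrite (bigD1 (Ordinal l0)) //= (_ : (n%:R - j%:R : R) - (n - j - t)%:R - t%:R = 0).
    by rewrite !mul0r mulr0.
  have e : (n%:R : R) = j%:R + (n - j - t)%:R + t%:R.
    by rewrite -!natrD; congr (_%:R); lia.
  rewrite e; ring.
by rewrite (leq_sizeP _ _ sp) ?mul0rn ?mul0r ?mulr0.
Qed.

Definition kappa (R : realFieldType) (n r j : nat) : R :=
  (r - j)`!%:R^-1 * (\prod_(l < r - j) ((n%:R - j%:R : R) - l%:R - 0%:R) * (1 *+ (j + 0) ^_ j)).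

Lemma Kop_X0 (R : realFieldType) (n r j i : nat) :
  (Kop n r j ('X^i : {poly R}))`_0 = (i == j)%:R * kappa R n r j.
Proof.
rewrite coef_Kop coefXn addn0 /kappa addn0 eq_sym.
by rewrite -mulr_natr; ring.
Qed.

Lemma kappa_neq0 (R : realFieldType) (n r j : nat) :
  (j <= r)%N -> (r <= n)%N -> kappa R n r j != 0.
Proof.
move=> jr rn; rewrite /kappa addn0 ffactnn.
rewrite !mulf_neq0 //.
- by rewrite invr_eq0 pnatr_eq0 -lt0n fact_gt0.
- apply/prodf_neq0 => l _.
  have hl := ltn_ord l.
  have -> : (n%:R - j%:R - l%:R - 0%:R : R) = (n - j - l)%:R.
    rewrite subr0 natrB; last lia. rewrite natrB; last lia. by [].
  rewrite pnatr_eq0; lia.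
- by rewrite pnatr_eq0 -lt0n fact_gt0.
Qed.

Definition ffp (R : realFieldType) (i : nat) : {poly R} := \prod_(l < i) ('X - (l%:R)%:P).

Lemma ffp_eval (R : realFieldType) (i k : nat) : (ffp R i).[k%:R] = (k ^_ i)%:R.
Proof.
elim: i => [|i IH]; first by rewrite /ffp big_ord0 hornerC ffactn0.
rewrite /ffp big_ord_recr /= hornerM -/(ffp R i) IH hornerXsubC ffactnSr natrM.
case: (leqP i k) => h; first by rewrite natrB.
by rewrite ffact_small // !mul0r.
Qed.

Lemma ffp_size (R : realFieldType) (i : nat) : (size (ffp R i) <= i.+1)%N.
Proof.
elim: i => [|i IH]; first by rewrite /ffp big_ord0 size_poly1.
rewrite /ffp big_ord_recr /= -/(ffp R i).
apply: leq_trans (size_polyMleq _ _) _; by rewrite size_XsubC addn2.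
Qed.

Lemma size_sum_leq (R : realFieldType) (m s : nat) (F : 'I_m -> {poly R}) :
  (forall i, (size (F i) <= s)%N) -> (size (\sum_(i < m) F i)%R <= s)%N.
Proof.
move=> H; apply: (big_ind (fun p : {poly R} => (size p <= s)%N)) => //.
- by rewrite size_poly0.
- move=> x y hx hy; apply: leq_trans (size_polyD _ _) _; by rewrite geq_max hx hy.
Qed.

Lemma root_lemma (R : realFieldType) (r : nat) (P : {poly R}) (s : seq nat) :
  (size P <= r.+1)%N -> uniq s -> size s = r.+1 ->
  (forall k, k \in s -> P.[k%:R] = 0) -> P = 0.
Proof.
move=> sP us ss H; apply/eqP; apply: contraT => nz.
have := max_poly_roots (rs := [seq k%:R | k <- s]) nz.
rewrite size_map ss.
have -> : all (root P) [seq k%:R | k <- s].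
  by apply/allP => x /mapP [k ks ->]; apply/eqP; apply: H.
have -> : uniq [seq (k%:R : R) | k <- s].
  by rewrite map_inj_uniq // => x y /eqP; rewrite eqr_nat => /eqP.
by move=> /(_ isT isT); rewrite ltnNge sP.
Qed.

Section Core.
End Core.

Lemma core_uniq (R : realFieldType) (n r : nat) (a : nat -> {poly R})
  (T : {poly R} -> {poly R}) :
  (r <= n)%N ->
  (forall p, T p = \sum_(i < r.+1) a i * p^`(i)) ->
  (forall k t, (k <= n)%N -> (n - r < t)%N -> (T 'X^k)`_t = 0) ->
  (forall j, (j <= r)%N -> (T 'X^j)`_0 = 0) ->
  forall p, T p = 0.
Proof.
move=> rn HT H1 H2.
have coefT : forall k t, (T 'X^k)`_t = \sum_(i < r.+1)
    (if (t < k - i)%N then 0 else (a i)`_(t - (k - i))) * (k ^_ i)%:R.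
  move=> k t; rewrite HT coef_sum; apply: eq_bigr => i _.
  by rewrite derivnXn mulrnAr coefMn coefMXn mulr_natr.
pose U d := \sum_(i < r.+1) (a i)`_(i + d) *: ffp R i.
pose L j := \sum_(i < r.+1) (if (j <= i)%N then (a i)`_(i - j) else 0) *: ffp R i.
have sU : forall d, (size (U d) <= r.+1)%N.
  move=> d; apply: size_sum_leq => i.
  by apply: leq_trans (size_scale_leq _ _) _; apply: leq_trans (ffp_size _ _) _.
have sL : forall j, (size (L j) <= r.+1)%N.
  move=> j; apply: size_sum_leq => i.
  by apply: leq_trans (size_scale_leq _ _) _; apply: leq_trans (ffp_size _ _) _.
have evU : forall d k, (U d).[k%:R] = (T 'X^k)`_(k + d).
  move=> d k; rewrite horner_sum coefT; apply: eq_bigr => i _.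
  rewrite hornerZ ffp_eval; case: (leqP i k) => hik.
    rewrite (_ : (k + d < k - i)%N = false); last lia.
    by rewrite (_ : (k + d - (k - i))%N = (i + d)%N); last lia.
  by rewrite ffact_small // !mulr0.
have evL : forall j k, (j <= k)%N -> (L j).[k%:R] = (T 'X^k)`_(k - j).
  move=> j k jk; rewrite horner_sum coefT; apply: eq_bigr => i _.
  rewrite hornerZ ffp_eval; case: (leqP i k) => hik; last by rewrite ffact_small // !mulr0.
  case: (leqP j i) => hji.
    rewrite (_ : (k - j < k - i)%N = false); last lia.
    by rewrite (_ : (k - j - (k - i))%N = (i - j)%N); last lia.
  by rewrite (_ : (k - j < k - i)%N = true); last lia.
have U0 : forall d, (0 < d)%N -> U d = 0.
  move=> d d0; apply: (root_lemma (sU d) (iota_uniq (n - r) r.+1)); first by rewrite size_iota.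
  move=> k; rewrite mem_iota => hk; rewrite evU; apply: H1; lia.
have L0 : forall j, L j = 0.
  move=> j; case: (leqP j r) => hj; last first.
    rewrite /L big1 // => i _; have := ltn_ord i => hi.
    by rewrite (_ : (j <= i)%N = false) ?scale0r //; lia.
  apply: (root_lemma (sL j) (s := iota 0 j.+1 ++ iota (n - r + j).+1 (r - j))).
  - rewrite cat_uniq !iota_uniq andbT /=; apply/hasPn => x; rewrite !mem_iota => hx.
    apply/negP; change (~ x \in iota 0 j.+1); rewrite mem_iota; lia.
  - rewrite size_cat !size_iota; lia.
  - move=> k; rewrite mem_cat !mem_iota => /orP [hk|hk].
      case: (ltnP k j) => hkj.
        rewrite horner_sum big1 // => i _; rewrite hornerZ ffp_eval.
        case: ifP => hji; last by rewrite mul0r.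
        by rewrite ffact_small ?mulr0 //; lia.
      have -> : k = j by lia.
      by rewrite evL // subnn; apply: H2.
    by rewrite evL; [apply: H1; lia | lia].
have Xk : forall k, T 'X^k = 0.
  move=> k; apply/polyP => t; rewrite coef0.
  case: (leqP k t) => hkt.
    case: (posnP (t - k)) => htk.
      have -> : t = k by lia.
      by have := evL 0%N k (leq0n k); rewrite L0 horner0 subn0.
    by have := evU (t - k)%N k; rewrite U0 // horner0 subnKC.
  by have := evL (k - t)%N k (leq_subr _ _); rewrite L0 horner0 subKn // ltnW.
move=> p.
have ep : p = \sum_(k < size p) p`_k *: 'X^k by rewrite -poly_def coefK.
rewrite HT ep.
under eq_bigr => i _ do rewrite raddf_sum mulr_sumr.
rewrite exchange_big /= big1 // => k _.
under eq_bigr => i _ do rewrite derivnZ -scalerAr.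
by rewrite -scaler_sumr -HT Xk scaler0.
Qed.

Lemma Dop_to_seq (R : realFieldType) (r : nat) (T : {poly R} -> {poly R}) :
  Dop r T -> exists a : seq {poly R}, (size a <= r.+1)%N /\ T =1 diffop_app a.
Proof.
move=> [af Ha]; exists (mkseq af r.+1); rewrite size_mkseq; split => // p.
rewrite Ha /diffop_app.
rewrite -(big_mkord xpredT (fun i => (mkseq af r.+1)`_i * p^`(i))) size_mkseq big_mkord.
by apply: eq_bigr => i _; rewrite nth_mkseq.
Qed.

Lemma seq_to_Dop (R : realFieldType) (r : nat) (T : {poly R} -> {poly R}) (a : seq {poly R}) :
  (size a <= r.+1)%N -> T =1 diffop_app a -> Dop r T.
Proof.
move=> sa Ha; exists (fun i => a`_i) => p; rewrite Ha /diffop_app.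
rewrite (big_ord_widen r.+1 (fun i => a`_i * p^`(i))) // big_mkcond /=.
apply: eq_bigr => i _; case: ifP => // h.
by rewrite nth_default ?mul0r // leqNgt h.
Qed.

Lemma inP_size (R : realFieldType) (n r : nat) (q : {poly R}) :
  (r <= n)%N -> inP (n%:Z - r%:Z) q = (size q <= (n - r).+1)%N.
Proof. by move=> rn; rewrite subzn. Qed.

Lemma Kop_Lspace (R : realFieldType) (n r j : nat) : (j <= r)%N -> (r <= n)%N ->
  Lspace n r r (@Kop R n r j).
Proof.
move=> jr rn; split; first exact: Dop_to_seq (Dop_Kop _ _ jr).
move=> p sp; rewrite inP_size //; apply/leq_sizeP => t ht.
by apply: Kop_deg.
Qed.

Unset Implicit Arguments.

Theorem mainTheorem17 (R : realFieldType) (n r : nat) : (r <= n)%N ->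
  (* each K_{rj} lies in L_{r,r} *)
  (forall j : 'I_r.+1, Lspace n r r (@Kop R n r j)) /\
  (* linear independence *)
  (forall c : 'I_r.+1 -> R,
      (forall p : {poly R}, \sum_(j < r.+1) c j *: Kop n r j p = 0) ->
      forall j, c j = 0) /\
  (* spanning *)
  (forall L : {poly R} -> {poly R}, Lspace n r r L ->
      exists c : 'I_r.+1 -> R,
        forall p : {poly R}, L p = \sum_(j < r.+1) c j *: Kop n r j p).
Proof.
move=> rn.
have sumX0 : forall (c : 'I_r.+1 -> R) (j : 'I_r.+1),
    (\sum_(i < r.+1) c i *: Kop n r i ('X^j : {poly R}))`_0 = c j * kappa R n r j.
  move=> c j; rewrite coef_sum (bigD1 j) //= big1 ?addr0.
    by rewrite coefZ Kop_X0 eqxx mul1r.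
  move=> i ij; rewrite coefZ Kop_X0.
  by rewrite (_ : (j == i :> nat) = false) ?mul0r ?mulr0 // eq_sym; apply/negbTE.
split; first by move=> j; apply: Kop_Lspace => //; rewrite -ltnS.
split.
  move=> c H j.
  have kn : kappa R n r j != 0 by apply: kappa_neq0 => //; rewrite -ltnS.
  have := sumX0 c j; rewrite H coef0 => /esym /eqP.
  rewrite mulf_eq0 => /orP [/eqP //|].
  by rewrite (negbTE kn).
move=> L [[a [sa Ha]] HL].
pose c := fun j : 'I_r.+1 => (L 'X^j)`_0 / kappa R n r j.
exists c.
pose cn := fun k : nat => (L 'X^k)`_0 / kappa R n r k.
pose F := fun (k : nat) (q : {poly R}) => cn k *: Kop n r k q.
pose M := fun p => L p - \sum_(j < r.+1) c j *: Kop n r j p.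
have DL : Dop r L by apply: seq_to_Dop sa Ha.
have DF : forall k, (k < r.+1)%N -> Dop r (F k).
  move=> k kr; have E : forall q, F k q = (cn k)%:P * Kop n r k q + 0 * Kop n r k q.
    by move=> q; rewrite mul0r addr0 mul_polyC.
  eapply Dop_ext; first exact: E.
  by apply: Dop_lin; apply: Dop_Kop.
have DM : Dop r M.
  have E : forall p, M p = 1 * L p + (-1) * \sum_(j < r.+1) F j p.
    by move=> p; rewrite mul1r mulN1r.
  eapply Dop_ext; first exact: E.
  by apply: Dop_lin => //; apply: Dop_sum.
have [b Hb] := DM.
have M0 : forall p, M p = 0.
  apply: (core_uniq rn Hb).
  - move=> k t kn tn; rewrite /M coefB coef_sum big1.
      have := HL 'X^k; rewrite size_polyXn ltnS => /(_ kn).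
      by rewrite inP_size // => /leq_sizeP -> //; rewrite subr0.
    move=> j _; rewrite coefZ Kop_deg ?mulr0 // ?size_polyXn //; by rewrite -ltnS.
  - move=> j jr; rewrite /M coefB (sumX0 c (Ordinal (jr : (j < r.+1)%N))) /c /=.
    rewrite divfK ?subrr //; by apply: kappa_neq0.
by move=> p; apply/eqP; rewrite -subr_eq0; apply/eqP; apply: M0.
Qed.
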